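(* In the bandit setting described in the context, let $\epsilon\le\mathcal{G}^2$. Then for any $a\in\mathcal{A}$ and all $t=1,\dots,n$, $$|\langle\hat w_t,\Phi_m(a)\rangle|\le\mathcal{G}^2\sup_{c,d\in\mathcal{A}}\left|\Phi_m(c)^\top\left(\mathbb{E}_{x\sim p_t}[\Phi_m(x)\Phi_m(x)^\top]\right)^{-1}\Phi_m(d)\right|.$$ Further, if the exploration parameter satisfies $\gamma>4\eta\mathcal{G}^4m$, then $\eta|\langle\hat w_t,\Phi_m(a)\rangle|\le1$ for all $a\in\mathcal{A}$.
   Context: $\mathcal{A}\subset\mathbb{R}^d$ is finite; $\mathcal{K}$ is a kernel with feature map $\Phi$, $\sup_{a\in\mathcal{A}}\mathcal{K}(a,a)\le\mathcal{G}^2$; the adversary plays $w_t=\Phi(y_t)$ with $|\mathcal{K}(a,y_t)|\le\mathcal{G}^2$ for $a\in\mathcal{A}$. $\Phi_m:\mathbb{R}^d\to\mathbb{R}^m$ has kernel $\hat{\mathcal{K}}_m(x,y)=\langle\Phi_m(x),\Phi_m(y)\rangle$ with $|\mathcal{K}(x,y)-\hat{\mathcal{K}}_m(x,y)|\le\epsilon$ for all $x,y\in\mathcal{A}$. The player plays $a_t\sim p_t=\gamma\nu_{\mathcal{J}}^{\mathcal{A}}+(1-\gamma)q_t$, with $q_t$ a distribution on $\mathcal{A}$, $\gamma\in(0,1]$, and $\nu_{\mathcal{J}}^{\mathcal{A}}$ a distribution on $\mathcal{A}$ whose image under $\Phi_m$ is John's distribution of $\mathrm{conv}(\Phi_m(\mathcal{A}))$,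 in coordinates where John's ellipsoid is the unit ball centered at the origin (so $\mathbb{E}_{\nu_{\mathcal{J}}^{\mathcal{A}}}[\Phi_m\Phi_m^\top]=I_m/m$). $\eta>0$ is the learning rate. The loss estimate is $\hat w_t=\mathcal{K}(a_t,y_t)\left(\mathbb{E}_{x\sim p_t}[\Phi_m(x)\Phi_m(x)^\top]\right)^{-1}\Phi_m(a_t)$. *)

(* Defs.v *)
From HB Require Import structures.
From mathcomp Require Import all_boot all_order all_algebra.
From mathcomp Require Import reals.
Set Implicit Arguments. Unset Strict Implicit. Unset Printing Implicit Defensive.
Import Order.TTheory GRing.Theory Num.Theory.
Local Open Scope ring_scope.

Definition dotv (R : realType) (k : nat) (u v : 'cV[R]_k) : R := (u^T *m v) 0 0.

Definition is_distr (R : realType) (T : finType) (p : T -> R) : Prop :=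
  (forall i, 0 <= p i) /\ \sum_i p i = 1.

(* Positive semi-definite (symmetric) kernel on R^d; by Moore-Aronszajn this is
   equivalent to the existence of a feature map Phi into a Hilbert space with
   K(x,y) = <Phi x, Phi y>. *)
Definition is_kernel (R : realType) (d : nat) (K : 'cV[R]_d -> 'cV[R]_d -> R) : Prop :=
  (forall x y, K x y = K y x) /\
  (forall (k : nat) (x : 'I_k -> 'cV[R]_d) (c : 'I_k -> R),
      0 <= \sum_i \sum_j c i * c j * K (x i) (x j)).

(* E_{x ~ p}[Phi_m(x) Phi_m(x)^T] for p a distribution on A = {pt i}. *)
Definition cov_mx (R : realType) (T : finType) (d m : nat)
  (pt : T -> 'cV[R]_d) (Phim : 'cV[R]_d -> 'cV[R]_m) (p : T -> R) : 'M[R]_m :=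
  \sum_i p i *: (Phim (pt i) *m (Phim (pt i))^T).

(* John's distribution of conv(Phi_m(A)), in coordinates where John's
   ellipsoid is the unit ball centred at the origin (John's theorem and its
   converse):  the unit ball lies in conv(Phi_m(A)); nu is supported on
   contact points u (|u| = 1 and the tangent hyperplane at u supports
   conv(Phi_m(A))); and  E_nu[Phi_m] = 0,  E_nu[Phi_m Phi_m^T] = I_m / m. *)
Definition is_John_distr (R : realType) (T : finType) (d m : nat)
  (pt : T -> 'cV[R]_d) (Phim : 'cV[R]_d -> 'cV[R]_m) (nu : T -> R) : Prop :=
  [/\ is_distr nu,
      (forall u : 'cV[R]_m, dotv u u <= 1 ->
         exists lam : T -> R, is_distr lam /\ u = \sum_i lam i *: Phim (pt i)),
      (forall i, 0 < nu i ->
         dotv (Phim (pt i)) (Phim (pt i)) = 1 /\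
         forall j, dotv (Phim (pt j)) (Phim (pt i)) <= 1),
      \sum_i nu i *: Phim (pt i) = 0
    & cov_mx pt Phim nu = (m%:R)^-1 *: 1%:M].

Definition mix_distr (R : realType) (T : finType) (gamma : R) (nu q : T -> R) : T -> R :=
  fun i => gamma * nu i + (1 - gamma) * q i.

Definition west (R : realType) (T : finType) (d m : nat)
  (pt : T -> 'cV[R]_d) (Phim : 'cV[R]_d -> 'cV[R]_m)
  (K : 'cV[R]_d -> 'cV[R]_d -> R) (p : T -> R) (at_ : T) (yt : 'cV[R]_d)
  : 'cV[R]_m :=
  K (pt at_) yt *: (invmx (cov_mx pt Phim p) *m Phim (pt at_)).

(* Main.v *)
Require Import Defs.
From HB Require Import structures.
From mathcomp Require Import all_boot all_order all_algebra.
From mathcomp Require Import reals.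
From mathcomp Require Import lra.
Import Order.TTheory GRing.Theory Num.Theory.
Local Open Scope ring_scope.
Set Implicit Arguments. Unset Strict Implicit.
Section S.
Variable R : realType.
Variable k : nat.
Implicit Types u v w z : 'cV[R]_k.
Lemma dotvC u v : dotv u v = dotv v u.
Proof. by rewrite /dotv -[in LHS](trmxK (u^T *m v)) trmx_mul trmxK mxE. Qed.
Lemma dotvDr u v w : dotv u (v + w) = dotv u v + dotv u w.
Proof. by rewrite /dotv mulmxDr mxE. Qed.
Lemma dotvZr u v a : dotv u (a *: v) = a * dotv u v.
Proof. by rewrite /dotv -scalemxAr mxE. Qed.
Lemma dotvDl u v w : dotv (v + w) u = dotv v u + dotv w u.
Proof. by rewrite dotvC dotvDr !(dotvC u). Qed.
Lemma dotvZl u v a : dotv (a *: v) u = a * dotv v u.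
Proof. by rewrite dotvC dotvZr dotvC. Qed.
Lemma dotv_mul u (A : 'M[R]_k) v : dotv u (A *m v) = dotv (A^T *m u) v.
Proof. by rewrite /dotv trmx_mul trmxK mulmxA. Qed.
Lemma dotvE u v : dotv u v = \sum_i u i 0 * v i 0.
Proof. by rewrite /dotv mxE; apply: eq_bigr => i _; rewrite mxE. Qed.
Lemma dotv_ge0 u : 0 <= dotv u u.
Proof. by rewrite dotvE; apply: sumr_ge0 => i _; rewrite -expr2 sqr_ge0. Qed.
Lemma dotv_eq0 u : dotv u u = 0 -> u = 0.
Proof.
rewrite dotvE => /psumr_eq0P H; apply/matrixP => i j.
rewrite (ord1 j) mxE; apply/eqP; rewrite -sqrf_eq0 expr2 H //.
by move=> l _; rewrite -expr2 sqr_ge0.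
Qed.
Lemma dotv_sumr I (r : seq I) (P : pred I) (F : I -> 'cV[R]_k) u :
  dotv u (\sum_(i <- r | P i) F i) = \sum_(i <- r | P i) dotv u (F i).
Proof. by rewrite /dotv mulmx_sumr summxE. Qed.
Lemma trmx_sum (I : finType) (F : I -> 'M[R]_k) : (\sum_i F i)^T = \sum_i (F i)^T.
Proof. exact: (raddf_sum (@trmx R k k)). Qed.
Lemma key (c : R) (P : 'M[R]_k) : 0 < c -> P^T = P ->
  (forall z : 'cV[R]_k, 0 <= dotv z (P *m z)) ->
  let M := c *: 1%:M + P in M \in unitmx /\
  forall u v : 'cV[R]_k, 2 * c * `|dotv u (invmx M *m v)| <= dotv u u + dotv v v.
Proof.
move=> c0 PT Ppsd M.
have MT : M^T = M by rewrite /M linearD /= linearZ /= trmx1 PT.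
have MzE z : M *m z = c *: z + P *m z by rewrite /M mulmxDl -scalemxAl mul1mx.
have quad z : dotv z (M *m z) = c * dotv z z + dotv z (P *m z).
  by rewrite MzE dotvDr dotvZr.
have Msym z w : dotv w (M *m z) = dotv z (M *m w).
  by rewrite dotv_mul MT dotvC.
have Munit : M \in unitmx.
  rewrite -row_free_unit -kermx_eq0; apply/eqP/row_matrixP => i.
  rewrite row0; set r := row i (kermx M).
  have : r *m M = 0 by apply/sub_kermxP; exact: row_sub.
  move=> /(congr1 trmx); rewrite trmx_mul MT trmx0 => H.
  have : dotv r^T (M *m r^T) = 0 by rewrite H /dotv mulmx0 mxE.
  rewrite quad => H2.
  have := dotv_ge0 r^T; have := Ppsd r^T => h1 h2.
  have : dotv r^T r^T = 0.
    apply/eqP; rewrite eq_le h2 andbT.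
    rewrite -(@ler_pM2l _ c) // mulr0; lra.
  by move/dotv_eq0 => /(congr1 trmx); rewrite trmxK trmx0.
split => // u v.
set z := invmx M *m u; set w := invmx M *m v.
have Mz : M *m z = u by rewrite /z mulKVmx.
have Mw : M *m w = v by rewrite /w mulKVmx.
have -> : dotv u w = dotv z (M *m w) by rewrite -Mz dotv_mul MT.
have bnd x : c * dotv x (M *m x) <= dotv (M *m x) (M *m x).
  rewrite quad [in X in _ <= X]MzE !dotvDl !dotvDr !dotvZl !dotvZr (dotvC (P *m x) x).
  have := Ppsd x; have := dotv_ge0 (P *m x). nra.
have Mpsd x : 0 <= dotv x (M *m x).
  by rewrite quad; have := Ppsd x; have := dotv_ge0 x; nra.
have pos s : 0 <= dotv z (M *m z) + 2 * s * dotv z (M *m w) + s ^+ 2 * dotv w (M *m w).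
  have := Mpsd (z + s *: w).
  rewrite mulmxDr -scalemxAr !dotvDl !dotvDr !dotvZl !dotvZr (Msym z w).
  nra.
have p1 := pos 1; have p2 := pos (-1).
have b1 := bnd z; have b2 := bnd w.
rewrite [in X in _ <= X]Mz in b1; rewrite [in X in _ <= X]Mw in b2.
have : 2 * `|dotv z (M *m w)| <= dotv z (M *m z) + dotv w (M *m w).
  case: (lerP 0 (dotv z (M *m w))) => h.
    rewrite ger0_norm //; lra.
  rewrite ltr0_norm //; lra.
move=> H; have := ler_wpM2l (ltW c0) H. lra.
Qed.
End S.

Lemma max_ge (R : realType) (T : finType) (F : T -> R) (c : T) :
  F c <= \big[Num.max/0]_(i : T) F i.
Proof. by rewrite (bigD1 c) //= le_max lexx. Qed.

Lemma cov_psd (R : realType) (T : finType) (d m : nat)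
  (pt : T -> 'cV[R]_d) (Phim : 'cV[R]_d -> 'cV[R]_m) (p : T -> R) :
  (forall i, 0 <= p i) ->
  (cov_mx pt Phim p)^T = cov_mx pt Phim p /\
  forall z, 0 <= dotv z (cov_mx pt Phim p *m z).
Proof.
move=> hp; split.
  rewrite /cov_mx trmx_sum; apply: eq_bigr => i _.
  by rewrite linearZ /= trmx_mul trmxK.
move=> z; rewrite /cov_mx mulmx_suml dotv_sumr; apply: sumr_ge0 => i _.
rewrite -scalemxAl dotvZr -mulmxA.
set X := Phim (pt i).
rewrite [X^T *m z]mx11_scalar mul_mx_scalar dotvZr.
have -> : (X^T *m z) 0 0 = dotv X z by [].
rewrite dotvC; apply: mulr_ge0 => //; rewrite -expr2 sqr_ge0 //.
Qed.
Unset Implicit Arguments. Set Strict Implicit.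

Theorem lemma7
  (R : realType) (d m n : nat)
  (T : finType) (pt : T -> 'cV[R]_d) (pt_inj : injective pt)
  (K : 'cV[R]_d -> 'cV[R]_d -> R) (G eps gamma eta : R)
  (Phim : 'cV[R]_d -> 'cV[R]_m)
  (nu : T -> R) (q : nat -> T -> R) (a : nat -> T) (y : nat -> 'cV[R]_d)
  (hK : is_kernel K)
  (hG : forall c, K (pt c) (pt c) <= G ^+ 2)
  (hy : forall t c, `|K (pt c) (y t)| <= G ^+ 2)
  (happrox : forall c e, `|K (pt c) (pt e) - dotv (Phim (pt c)) (Phim (pt e))| <= eps)
  (hnu : is_John_distr pt Phim nu)
  (hq : forall t, is_distr (q t))
  (hgamma : 0 < gamma <= 1) (heta : 0 < eta)
  (heps : eps <= G ^+ 2) :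
  forall t, (1 <= t <= n)%N ->
  let p := mix_distr gamma nu (q t) in
  let wt := west pt Phim K p (a t) (y t) in
  (forall c : T,
     `|dotv wt (Phim (pt c))|
       <= G ^+ 2 * \big[Num.max/0]_(c' : T) \big[Num.max/0]_(e : T)
              `|dotv (Phim (pt c')) (invmx (cov_mx pt Phim p) *m Phim (pt e))|)
  /\
  (gamma > 4%:R * eta * G ^+ 4 * m%:R ->
     forall c : T, eta * `|dotv wt (Phim (pt c))| <= 1).

Proof.
move=> t _ p wt.
have G2ge0 : 0 <= G ^+ 2 by apply: sqr_ge0.
set B := invmx (cov_mx pt Phim p).
have wtE c : dotv wt (Phim (pt c)) =
    K (pt (a t)) (y t) * dotv (Phim (pt c)) (B *m Phim (pt (a t))).
  by rewrite /wt /west dotvZl dotvC.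
split.
  move=> c; rewrite wtE normrM.
  apply: ler_pM => //.
  apply: le_trans _ (max_ge (fun c' => \big[Num.max/0]_(e : T)
     `|dotv (Phim (pt c')) (B *m Phim (pt e))|) c).
  exact: (max_ge (fun e => `|dotv (Phim (pt c)) (B *m Phim (pt e))|) (a t)).
move=> hg c.
have [m0|mpos] := eqVneq m 0%N.
  rewrite wtE dotvE big1 ?mulr0 ?normr0 ?mulr0 ?ler01 //.
  by move=> i _; exfalso; move: (ltn_ord i); rewrite [X in (_ < X)%N]m0.
case: hnu => _ _ _ _ hcov.
case/andP: hgamma => g0 g1.
have hq' := hq t; case: hq' => qge0 _.
set P := (1 - gamma) *: cov_mx pt Phim (q t).
set c0 := gamma / m%:R.
have c0pos : 0 < c0 by rewrite divr_gt0 // ltr0n lt0n.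
have covE : cov_mx pt Phim p = c0 *: 1%:M + P.
  rewrite /P /p /cov_mx /mix_distr.
  under eq_bigr do rewrite scalerDl -!scalerA.
  rewrite big_split -!scaler_sumr /=.
  by rewrite -/(cov_mx pt Phim nu) hcov scalerA.
have [PT Ppsd] := cov_psd pt Phim qge0.
have PT' : P^T = P by rewrite /P linearZ /= PT.
have Ppsd' z : 0 <= dotv z (P *m z).
  by rewrite /P -scalemxAl dotvZr; apply: mulr_ge0 => //; rewrite subr_ge0.
have [_ kb] := key c0pos PT' Ppsd'.
have kb' := kb (Phim (pt c)) (Phim (pt (a t))).
rewrite -covE -/B in kb'.
have nb e : dotv (Phim (pt e)) (Phim (pt e)) <= 2 * G ^+ 2.
  have := happrox e e; rewrite ler_norml => /andP [h1 _].
  have := hG e; lra.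
have nb1 := nb c; have nb2 := nb (a t).
rewrite wtE normrM.
set k := `|K (pt (a t)) (y t)|.
set x := `|dotv (Phim (pt c)) (B *m Phim (pt (a t)))| in kb' *.
have k0 : 0 <= k by apply: normr_ge0.
have x0 : 0 <= x by apply: normr_ge0.
have kG : k <= G ^+ 2 by apply: hy.
have hx : 2 * c0 * x <= 4 * G ^+ 2 by lra.
have hc : 4 * eta * G ^+ 4 < c0.
  rewrite /c0 ltr_pdivlMr ?ltr0n ?lt0n //.
have h1a : k * (2 * c0 * x) <= G ^+ 2 * (4 * G ^+ 2).
  by apply: ler_pM => //; rewrite mulr_ge0 // mulr_ge0 // ltW.
have h1 : eta * (k * x) * (2 * c0) <= eta * (G ^+ 2 * (4 * G ^+ 2)).
  have := ler_wpM2l (ltW heta) h1a; lra.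
have e4 : G ^+ 4 = G ^+ 2 * G ^+ 2 by rewrite -exprD.
rewrite e4 in hc.
have : eta * (k * x) * (2 * c0) < c0 by lra.
move=> h2.
have h3 : eta * (k * x) * 2 < 1.
  nra.
have : 0 <= eta * (k * x) by rewrite mulr_ge0 // ?mulr_ge0 // ltW.
lra.
Qed.
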